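(* Let $u_{tm}=0110100110010110\cdots$ be the Thue–Morse word and $a_{tm}=\tfrac12,1,\tfrac34,\tfrac14,\ldots$ the canonical representative of its valid permutation. (i) The valid permutation of the word $0\,u'$, where $u'=1221211221121221\cdots$ is the Thue–Morse word written over the alphabet $\{1,2\}$ (with $1<2$), is ergodic, with canonical representative $0,\tfrac12,1,\tfrac34,\tfrac14,\ldots$ (that is, $0$ followed by $a_{tm}$). (ii) The valid permutation of the word $2\,u_{tm}=20110100110010110\cdots$ is not ergodic.
   Context: For an aperiodic infinite word $u$ over $\{0,\ldots,q-1\}$, the valid permutation $\alpha_u$ is the infinite permutation with $\alpha_u[i]<\alpha_u[j]$ iff the shift $T^iu=u[i]u[i+1]\cdots$ is lexicographically smaller than $T^ju$. An infinite permutation is an equivalence class of real sequences with pairwise distinct elements under $(a[n])\sim(b[n])$ iff $a[i]<a[j]\Leftrightarrow b[i]<b[j]$ for all $i,j$. A real sequence $(a[i])_{i\ge0}$ is canonical if its elements are pairwise distinct, lie in $[0,1]$, and for every $t\in[0,1]$, $\#\{0\le k<n: a[j+k]<t\}/n\to t$ as $n\to\infty$ uniformly in $j$; a permutation is ergodic if it has a canonical representative. The sequence $a_{tm}$ is the fixed point starting with $\tfrac12$ of the morphism $x\mapsto(\tfrac x2+\tfrac14,\tfrac x2+\tfrac34)$ for $0\le x\le\tfrac12$, $x\mapsto(\tfrac x2+\tfrac14,\tfrac x2-\tfrac14)$ for $\tfrac12<x\le1$. *)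

(* Defs.v *)
From Stdlib Require Import Reals Lra Lia Arith.
Open Scope R_scope.

Definition word := nat -> nat.
Definition shift (i : nat) (u : word) : word := fun n => u (i + n)%nat.
Definition lex_lt (u v : word) : Prop :=
  exists k : nat, (forall i : nat, (i < k)%nat -> u i = v i) /\ (u k < v k)%nat.

Definition aperiodic (u : word) : Prop :=
  ~ (exists p n0 : nat, (0 < p)%nat /\ forall n, (n0 <= n)%nat -> u (n + p)%nat = u n).

Definition pairwise_distinct (a : nat -> R) : Prop :=
  forall i j : nat, i <> j -> a i <> a j.
Definition represents_valid (u : word) (a : nat -> R) : Prop :=
  pairwise_distinct a /\
  forall i j : nat, a i < a j <-> lex_lt (shift i u) (shift j u).

Fixpoint count_below (a : nat -> R) (j n : nat) (t : R) : nat :=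
  match n with
  | O => O
  | S m => (count_below a j m t + if Rlt_dec (a (j + m)%nat) t then 1 else 0)%nat
  end.

Definition canonical (a : nat -> R) : Prop :=
  pairwise_distinct a /\
  (forall i, 0 <= a i <= 1) /\
  forall t, 0 <= t <= 1 ->
    forall eps, eps > 0 -> exists N : nat, forall n j : nat, (N <= n)%nat -> (0 < n)%nat ->
      Rabs (INR (count_below a j n t) / INR n - t) < eps.

Definition ergodic_valid (u : word) : Prop :=
  exists a, represents_valid u a /\ canonical a.

Fixpoint popcount_fuel (fuel n : nat) : nat :=
  match fuel with
  | O => O
  | S f => match n with
           | O => O
           | _ => ((if Nat.odd n then 1 else 0) + popcount_fuel f (Nat.div2 n))%nat
           end
  end.
Definition u_tm : word := fun n => if Nat.even (popcount_fuel n n) then 0%nat else 1%nat.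

(** a_tm: fixed point starting with 1/2 of the morphism
    x |-> (x/2+1/4, x/2+3/4) if x <= 1/2, x |-> (x/2+1/4, x/2-1/4) if x > 1/2,
    i.e. a(0)=1/2, a(2n) = first image letter of a(n), a(2n+1) = second one. *)
Fixpoint a_tm_fuel (fuel n : nat) : R :=
  match fuel with
  | O => 1/2
  | S f => match n with
           | O => 1/2
           | _ => let x := a_tm_fuel f (Nat.div2 n) in
                  if Nat.even n then x/2 + 1/4
                  else if Rle_dec x (1/2) then x/2 + 3/4 else x/2 - 1/4
           end
  end.
Definition a_tm (n : nat) : R := a_tm_fuel n n.

Definition word_0u' : word := fun n => match n with O => 0%nat | S m => (u_tm m + 1)%nat end.
Definition word_2utm : word := fun n => match n with O => 2%nat | S m => u_tm m end.
Definition zero_a_tm (n : nat) : R := match n with O => 0 | S m => a_tm m end.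

(* Main.v *)
Require Import Defs.
From Stdlib Require Import Reals Lra Lia Arith.

Open Scope nat_scope.

Lemma pc_fuel : forall f g n, (n <= f)%nat -> (n <= g)%nat -> popcount_fuel f n = popcount_fuel g n.
Proof.
  induction f as [|f IH]; intros g n Hf Hg.
  - assert (n = 0%nat) by lia; subst. destruct g; reflexivity.
  - destruct n as [|n']. { destruct g; reflexivity. }
    destruct g as [|g]; [lia|]. cbn [popcount_fuel a_tm_fuel].
    f_equal. apply IH.
    + pose proof (Nat.lt_div2 (S n')). lia.
    + pose proof (Nat.lt_div2 (S n')). lia.
Qed.

Lemma pc_S : forall f n, popcount_fuel (S f) (S n) = ((if Nat.odd (S n) then 1 else 0) + popcount_fuel f (Nat.div2 (S n)))%nat.
Proof. reflexivity. Qed.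
Lemma a_S : forall f n, a_tm_fuel (S f) (S n) = (let x := a_tm_fuel f (Nat.div2 (S n)) in
                  if Nat.even (S n) then x/2 + 1/4
                  else if Rle_dec x (1/2) then x/2 + 3/4 else x/2 - 1/4)%R.
Proof. reflexivity. Qed.

Lemma pc_even : forall n, popcount_fuel (2*n) (2*n) = popcount_fuel n n.
Proof.
  intros [|n]. reflexivity.
  replace (2 * S n)%nat with (S (S (2*n)))%nat by lia.
  rewrite (pc_S (S (2*n)) (S (2*n))).
  replace (Nat.odd (S (S (2*n)))) with false.
  2:{ rewrite Nat.odd_succ, Nat.even_succ, Nat.odd_mul. reflexivity. }
  replace (Nat.div2 (S (S (2*n)))) with (S n).
  2:{ replace (S (S (2*n))) with (2 * S n)%nat by lia. rewrite Nat.div2_double. reflexivity. }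
  rewrite Nat.add_0_l. apply pc_fuel; lia.
Qed.

Lemma pc_odd : forall n, popcount_fuel (2*n+1) (2*n+1) = S (popcount_fuel n n).
Proof.
  intros n.
  replace (2 * n + 1)%nat with (S (2*n))%nat by lia.
  rewrite pc_S.
  replace (Nat.odd (S (2*n))) with true.
  2:{ rewrite Nat.odd_succ, Nat.even_mul. reflexivity. }
  replace (Nat.div2 (S (2*n))) with n.
  2:{ rewrite Nat.div2_succ_double. reflexivity. }
  rewrite Nat.add_1_l. f_equal. apply pc_fuel; lia.
Qed.

Lemma u_even : forall n, u_tm (2*n) = u_tm n.
Proof. intros n; unfold u_tm; rewrite pc_even; reflexivity. Qed.

Lemma u_odd : forall n, u_tm (2*n+1) = (1 - u_tm n)%nat.
Proof. intros n; unfold u_tm; rewrite pc_odd, Nat.even_succ, <- Nat.negb_even.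
  destruct (Nat.even (popcount_fuel n n)); reflexivity. Qed.

Lemma u_le1 : forall n, (u_tm n <= 1)%nat.
Proof. intros n; unfold u_tm; destruct Nat.even; lia. Qed.

Lemma u_01 : forall n, u_tm n = 0%nat \/ u_tm n = 1%nat.
Proof. intros n; unfold u_tm; destruct Nat.even; auto. Qed.

Lemma u_nocube : forall n, u_tm n = u_tm (S n) -> u_tm (S (S n)) = (1 - u_tm (S n))%nat.
Proof.
  intros n H. destruct (Nat.Even_or_Odd n) as [[p ->]|[p ->]].
  - replace (S (2*p)) with (2*p+1)%nat in H by lia. rewrite u_even, u_odd in H.
    destruct (u_01 p) as [E|E]; rewrite E in H; simpl in H; discriminate.
  - replace (S (S (2*p+1))) with (2*(p+1)+1)%nat by lia.
    replace (S (2*p+1)) with (2*(p+1))%nat by lia.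
    rewrite u_odd, u_even. reflexivity.
Qed.

Open Scope R_scope.
Lemma a_fuel : forall f g n, (n <= f)%nat -> (n <= g)%nat -> a_tm_fuel f n = a_tm_fuel g n.
Proof.
  induction f as [|f IH]; intros g n Hf Hg.
  - assert (n = 0%nat) by lia; subst. destruct g; reflexivity.
  - destruct n as [|n']. { destruct g; reflexivity. }
    destruct g as [|g]; [lia|]. cbn [popcount_fuel a_tm_fuel].
    rewrite (IH g). reflexivity.
    + pose proof (Nat.lt_div2 (S n')). lia.
    + pose proof (Nat.lt_div2 (S n')). lia.
Qed.

Definition uc (x : R) : R := if Rle_dec x (1/2) then x/2 + 3/4 else x/2 - 1/4.

Lemma a_even : forall n, (0 < n)%nat -> a_tm (2*n)%nat = a_tm n / 2 + 1/4.
Proof.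
  intros [|n] Hn; [lia|]. unfold a_tm.
  replace (2 * S n)%nat with (S (S (2*n)))%nat by lia.
  rewrite (a_S (S (2*n)) (S (2*n))). cbv zeta.
  replace (Nat.even (S (S (2*n)))) with true.
  2:{ rewrite Nat.even_succ, Nat.odd_succ, Nat.even_mul. reflexivity. }
  replace (Nat.div2 (S (S (2*n)))) with (S n).
  2:{ replace (S (S (2*n))) with (2 * S n)%nat by lia. rewrite Nat.div2_double. reflexivity. }
  rewrite (a_fuel _ (S n)); [reflexivity|lia|lia].
Qed.

Lemma a0 : a_tm 0 = 1/2.
Proof. reflexivity. Qed.

Lemma a_even' : forall n, a_tm (2*n)%nat = a_tm n / 2 + 1/4 \/ (n = 0%nat).
Proof. intros [|n]; [right; reflexivity|left; apply a_even; lia]. Qed.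

Lemma a_odd : forall n, a_tm (2*n+1)%nat = uc (a_tm n).
Proof.
  intros n. unfold a_tm.
  replace (2 * n + 1)%nat with (S (2*n))%nat by lia.
  rewrite (a_S (2*n) (2*n)). cbv zeta.
  replace (Nat.even (S (2*n))) with false.
  2:{ rewrite Nat.even_succ, Nat.odd_mul. reflexivity. }
  replace (Nat.div2 (S (2*n))) with n.
  2:{ rewrite Nat.div2_succ_double. reflexivity. }
  rewrite (a_fuel _ n); [reflexivity|lia|lia].
Qed.

Open Scope R_scope.

Lemma a_range : forall n, 0 < a_tm n <= 1 /\ (a_tm n <= 1/2 <-> u_tm n = 0%nat).
Proof.
  intros n. induction n as [n IH] using lt_wf_ind.
  destruct (Nat.Even_or_Odd n) as [[p ->]|[p ->]].
  - destruct p as [|p]. { change (2*0)%nat with 0%nat. rewrite a0. unfold u_tm. simpl. split; [lra| split; intros; [reflexivity|lra]]. }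
    rewrite a_even by lia. rewrite u_even.
    destruct (IH (S p)) as [[H1 H2] H3]; [lia|].
    split; [lra|]. rewrite <- H3. split; intros; lra.
  - rewrite a_odd, u_odd. unfold uc.
    destruct (IH p) as [[H1 H2] H3]; [lia|].
    destruct (u_01 p) as [E|E]; rewrite E in *; simpl.
    + destruct (Rle_dec (a_tm p) (1/2)); [|tauto]. split; [lra|]. split; intros; [lra|discriminate].
    + destruct (Rle_dec (a_tm p) (1/2)) as [h|h]. { apply H3 in h; discriminate. }
      split; [lra|]. split; intros; [reflexivity|lra].
Qed.

Lemma a_pos : forall n, 0 < a_tm n. Proof. intros; apply a_range. Qed.
Lemma a_le1 : forall n, a_tm n <= 1. Proof. intros; apply a_range. Qed.
Lemma a_half : forall n, a_tm n <= 1/2 <-> u_tm n = 0%nat. Proof. intros; apply a_range. Qed.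

Lemma a_even_any : forall p, a_tm (2*p)%nat = a_tm p / 2 + 1/4 \/ p = 0%nat.
Proof. intros [|p]; [right; reflexivity|left; apply a_even; lia]. Qed.

Lemma a_even_rng : forall p, 1/4 < a_tm (2*p)%nat <= 3/4.
Proof.
  intros p. destruct (a_even_any p) as [E|E].
  - rewrite E. pose proof (a_pos p); pose proof (a_le1 p). lra.
  - subst. simpl. rewrite a0. lra.
Qed.

Lemma a_odd0 : forall p, u_tm p = 0%nat -> a_tm (2*p+1)%nat = a_tm p / 2 + 3/4.
Proof. intros p H. rewrite a_odd. unfold uc. apply a_half in H.
  destruct Rle_dec; [reflexivity|lra]. Qed.
Lemma a_odd1 : forall p, u_tm p = 1%nat -> a_tm (2*p+1)%nat = a_tm p / 2 - 1/4.
Proof. intros p H. rewrite a_odd. unfold uc.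
  destruct Rle_dec as [h|h]; [apply a_half in h; lia|reflexivity]. Qed.

Lemma a_half_eq : forall k, a_tm k = 1/2 -> k = 0%nat.
Proof.
  intros k. induction k as [k IH] using lt_wf_ind. intros H.
  destruct (Nat.Even_or_Odd k) as [[p ->]|[p ->]].
  - destruct (a_even_any p) as [E|E]; [|subst; reflexivity].
    rewrite E in H. destruct p as [|p]; [reflexivity|].
    assert (S p = 0%nat) by (apply IH; [lia|lra]). lia.
  - pose proof (a_pos p); pose proof (a_le1 p). destruct (u_01 p) as [E|E].
    + rewrite (a_odd0 _ E) in H. lra.
    + rewrite (a_odd1 _ E) in H. lra.
Qed.

Lemma a_inj : forall i j, a_tm i = a_tm j -> i = j.
Proof.
  intros i. induction i as [i IH] using lt_wf_ind. intros j H.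
  destruct (Nat.Even_or_Odd i) as [[m ->]|[m ->]];
  destruct (Nat.Even_or_Odd j) as [[n ->]|[n ->]].
  - destruct (a_even_any m) as [Em|Em]; destruct (a_even_any n) as [En|En].
    + rewrite Em, En in H. assert (a_tm m = a_tm n) by lra.
      destruct m as [|m]. { assert (n=0%nat) by (apply a_half_eq; rewrite <- H0; apply a0). subst; reflexivity. }
      f_equal. apply IH; [lia|auto].
    + subst n. rewrite Em in H. simpl in H. rewrite a0 in H.
      assert (a_tm m = 1/2) by lra. rewrite (a_half_eq m); auto.
    + subst m. rewrite En in H. simpl in H. rewrite a0 in H.
      assert (a_tm n = 1/2) by lra. rewrite (a_half_eq n); auto.
    + subst; reflexivity.
  - pose proof (a_even_rng m). destruct (u_01 n) as [E|E].
    + rewrite (a_odd0 _ E) in H. pose proof (a_pos n). lra.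
    + rewrite (a_odd1 _ E) in H. pose proof (a_le1 n). lra.
  - pose proof (a_even_rng n). destruct (u_01 m) as [E|E].
    + rewrite (a_odd0 _ E) in H. pose proof (a_pos m). lra.
    + rewrite (a_odd1 _ E) in H. pose proof (a_le1 m). lra.
  - pose proof (a_pos m); pose proof (a_le1 m); pose proof (a_pos n); pose proof (a_le1 n).
    pose proof (a_half m); pose proof (a_half n).
    destruct (u_01 m) as [E|E]; destruct (u_01 n) as [F|F].
    + rewrite (a_odd0 _ E), (a_odd0 _ F) in H. assert (a_tm m = a_tm n) by lra.
      f_equal. f_equal. apply IH; [lia|auto].
    + rewrite (a_odd0 _ E), (a_odd1 _ F) in H. lra.
    + rewrite (a_odd1 _ E), (a_odd0 _ F) in H. lra.
    + rewrite (a_odd1 _ E), (a_odd1 _ F) in H. assert (a_tm m = a_tm n) by lra.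
      f_equal. f_equal. apply IH; [lia|auto].
Qed.

Open Scope nat_scope.

Definition T i := shift i u_tm.

Lemma lex_irrefl : forall u, ~ lex_lt u u.
Proof. intros u [k [_ H]]. lia. Qed.

Lemma lex_asym : forall u v, lex_lt u v -> lex_lt v u -> False.
Proof.
  intros u v [k1 [H1 H1']] [k2 [H2 H2']].
  destruct (Nat.lt_trichotomy k1 k2) as [h|[h|h]].
  - specialize (H2 _ h). lia.
  - subst. lia.
  - specialize (H1 _ h). lia.
Qed.

Lemma lex_ext : forall u v u' v', (forall i, u i = u' i) -> (forall i, v i = v' i) ->
  lex_lt u v -> lex_lt u' v'.
Proof.
  intros u v u' v' Hu Hv [k [H1 H2]]. exists k. split.
  - intros i Hi. rewrite <- Hu, <- Hv. auto.
  - rewrite <- Hu, <- Hv. auto.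
Qed.

Lemma T_eq : forall i k, T i k = u_tm (i + k). Proof. reflexivity. Qed.

Lemma mu_lex : forall m n, lex_lt (T m) (T n) -> lex_lt (T (2*m)) (T (2*n)).
Proof.
  intros m n [k [H1 H2]]. exists (2*k)%nat. rewrite !T_eq in *. split.
  - intros i Hi. rewrite !T_eq. destruct (Nat.Even_or_Odd i) as [[p ->]|[p ->]].
    + replace (2*m + 2*p)%nat with (2*(m+p))%nat by lia.
      replace (2*n + 2*p)%nat with (2*(n+p))%nat by lia.
      rewrite !u_even. specialize (H1 p). rewrite !T_eq in H1. apply H1. lia.
    + replace (2*m + (2*p+1))%nat with (2*(m+p)+1)%nat by lia.
      replace (2*n + (2*p+1))%nat with (2*(n+p)+1)%nat by lia.
      rewrite !u_odd. specialize (H1 p). rewrite !T_eq in H1. rewrite H1 by lia. reflexivity.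
  - replace (2*m + 2*k)%nat with (2*(m+k))%nat by lia.
    replace (2*n + 2*k)%nat with (2*(n+k))%nat by lia.
    rewrite !u_even. auto.
Qed.

Lemma odd_lex : forall m n, u_tm m = u_tm n -> lex_lt (T m) (T n) ->
  lex_lt (T (2*m+1)) (T (2*n+1)).
Proof.
  intros m n E [k [H1 H2]]. rewrite !T_eq in H2.
  destruct k as [|k]. { rewrite !Nat.add_0_r in H2. lia. }
  exists (2*k+1)%nat. split.
  - intros i Hi. rewrite !T_eq. destruct i as [|i].
    + rewrite !Nat.add_0_r, !u_odd, E. reflexivity.
    + destruct (Nat.Even_or_Odd i) as [[p ->]|[p ->]].
      * replace (2*m+1 + S (2*p))%nat with (2*(m+1+p))%nat by lia.
        replace (2*n+1 + S (2*p))%nat with (2*(n+1+p))%nat by lia.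
        rewrite !u_even. specialize (H1 (S p)). rewrite !T_eq in H1.
        replace (m+1+p)%nat with (m + S p)%nat by lia. replace (n+1+p)%nat with (n + S p)%nat by lia.
        apply H1. lia.
      * replace (2*m+1 + S (2*p+1))%nat with (2*(m+1+p)+1)%nat by lia.
        replace (2*n+1 + S (2*p+1))%nat with (2*(n+1+p)+1)%nat by lia.
        rewrite !u_odd. specialize (H1 (S p)). rewrite !T_eq in H1.
        replace (m+1+p)%nat with (m + S p)%nat by lia. replace (n+1+p)%nat with (n + S p)%nat by lia.
        rewrite H1 by lia. reflexivity.
  - rewrite !T_eq.
    replace (2*m+1 + (2*k+1))%nat with (2*(m + S k))%nat by lia.
    replace (2*n+1 + (2*k+1))%nat with (2*(n + S k))%nat by lia.
    rewrite !u_even. auto.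
Qed.

Lemma first_lex : forall i j, (u_tm i < u_tm j)%nat -> lex_lt (T i) (T j).
Proof. intros i j H. exists 0%nat. split; [intros; lia|]. rewrite !T_eq, !Nat.add_0_r. auto. Qed.

Ltac lexw k := exists k; split; [intros ii Hii; rewrite !T_eq;
   repeat (destruct ii as [|ii]; [rewrite ?Nat.add_0_r, ?Nat.add_succ_r; lia|]); lia
  | rewrite !T_eq; lia].

Lemma mixA : forall m n, u_tm n = 0%nat -> lex_lt (T (2*m)) (T (2*n+1)).
Proof.
  intros m n H.
  assert (A0 : u_tm (2*m+0) = u_tm m) by (rewrite Nat.add_0_r; apply u_even).
  assert (A1 : u_tm (2*m+1) = (1 - u_tm m)%nat) by apply u_odd.
  assert (A2 : u_tm (2*m+2) = u_tm (m+1)) by (replace (2*m+2) with (2*(m+1)) by lia; apply u_even).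
  assert (A3 : u_tm (2*m+3) = (1 - u_tm (m+1))%nat) by (replace (2*m+3) with (2*(m+1)+1) by lia; apply u_odd).
  assert (B0 : u_tm (2*n+1+0) = (1 - u_tm n)%nat) by (rewrite Nat.add_0_r; apply u_odd).
  assert (B1 : u_tm (2*n+1+1) = u_tm (n+1)) by (replace (2*n+1+1) with (2*(n+1)) by lia; apply u_even).
  assert (B2 : u_tm (2*n+1+2) = (1 - u_tm (n+1))%nat) by (replace (2*n+1+2) with (2*(n+1)+1) by lia; apply u_odd).
  assert (B3 : u_tm (2*n+1+3) = u_tm (n+2)) by (replace (2*n+1+3) with (2*(n+2)) by lia; apply u_even).
  assert (NC : u_tm n = u_tm (n+1) -> u_tm (n+2) = (1 - u_tm (n+1))%nat).
  { intros h. replace (n+2)%nat with (S (S n)) by lia. replace (n+1)%nat with (S n) in * by lia.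
    apply u_nocube; auto. }
  pose proof (u_01 m); pose proof (u_01 (m+1)); pose proof (u_01 (n+1)).
  destruct (u_01 m) as [Em|Em].
  { exists 0%nat. split; [intros; lia|]. rewrite !T_eq. lia. }
  destruct (u_01 (n+1)) as [En|En].
  2:{ exists 1%nat. split; [intros ii Hii; assert (ii=0%nat) by lia; subst; rewrite !T_eq; lia|]. rewrite !T_eq. lia. }
  destruct (u_01 (m+1)) as [Fm|Fm].
  { exists 2%nat. split; [intros ii Hii; rewrite !T_eq; assert (ii=0\/ii=1)%nat as [->| ->] by lia; lia|]. rewrite !T_eq. lia. }
  exists 3%nat. split; [intros ii Hii; rewrite !T_eq; assert (ii=0\/ii=1\/ii=2)%nat as [->|[->| ->]] by lia; lia|].
  rewrite !T_eq. specialize (NC ltac:(lia)). lia.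
Qed.

Lemma mixB : forall m n, u_tm n = 1%nat -> lex_lt (T (2*n+1)) (T (2*m)).
Proof.
  intros m n H.
  assert (A0 : u_tm (2*m+0) = u_tm m) by (rewrite Nat.add_0_r; apply u_even).
  assert (A1 : u_tm (2*m+1) = (1 - u_tm m)%nat) by apply u_odd.
  assert (A2 : u_tm (2*m+2) = u_tm (m+1)) by (replace (2*m+2) with (2*(m+1)) by lia; apply u_even).
  assert (A3 : u_tm (2*m+3) = (1 - u_tm (m+1))%nat) by (replace (2*m+3) with (2*(m+1)+1) by lia; apply u_odd).
  assert (B0 : u_tm (2*n+1+0) = (1 - u_tm n)%nat) by (rewrite Nat.add_0_r; apply u_odd).
  assert (B1 : u_tm (2*n+1+1) = u_tm (n+1)) by (replace (2*n+1+1) with (2*(n+1)) by lia; apply u_even).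
  assert (B2 : u_tm (2*n+1+2) = (1 - u_tm (n+1))%nat) by (replace (2*n+1+2) with (2*(n+1)+1) by lia; apply u_odd).
  assert (B3 : u_tm (2*n+1+3) = u_tm (n+2)) by (replace (2*n+1+3) with (2*(n+2)) by lia; apply u_even).
  assert (NC : u_tm n = u_tm (n+1) -> u_tm (n+2) = (1 - u_tm (n+1))%nat).
  { intros h. replace (n+2)%nat with (S (S n)) by lia. replace (n+1)%nat with (S n) in * by lia.
    apply u_nocube; auto. }
  pose proof (u_01 m); pose proof (u_01 (m+1)); pose proof (u_01 (n+1)).
  destruct (u_01 m) as [Em|Em].
  2:{ exists 0%nat. split; [intros; lia|]. rewrite !T_eq. lia. }
  destruct (u_01 (n+1)) as [En|En].
  { exists 1%nat. split; [intros ii Hii; assert (ii=0%nat) by lia; subst; rewrite !T_eq; lia|]. rewrite !T_eq. lia. }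
  destruct (u_01 (m+1)) as [Fm|Fm].
  2:{ exists 2%nat. split; [intros ii Hii; rewrite !T_eq; assert (ii=0\/ii=1)%nat as [->| ->] by lia; lia|]. rewrite !T_eq. lia. }
  exists 3%nat. split; [intros ii Hii; rewrite !T_eq; assert (ii=0\/ii=1\/ii=2)%nat as [->|[->| ->]] by lia; lia|].
  rewrite !T_eq. specialize (NC ltac:(lia)). lia.
Qed.

Open Scope R_scope.

Lemma main_lt_aux : forall s i j, (i + j <= s)%nat -> a_tm i < a_tm j -> lex_lt (T i) (T j).
Proof.
  induction s as [|s IH]; intros i j Hs H.
  { assert (i = 0%nat) by lia; assert (j = 0%nat) by lia; subst; lra. }
  destruct (Nat.Even_or_Odd i) as [[m ->]|[m ->]];
  destruct (Nat.Even_or_Odd j) as [[n ->]|[n ->]].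
  - destruct (a_even_any m) as [Em|Em]; destruct (a_even_any n) as [En|En].
    + rewrite Em, En in H. apply mu_lex. apply IH; [|lra].
      destruct (Nat.eq_dec (m+n) 0) as [e|e]; [|lia].
      assert (m=0%nat) by lia; assert (n=0%nat) by lia; subst; lra.
    + subst n. rewrite Em in H. simpl in H. rewrite a0 in H. apply mu_lex. apply IH; [lia|rewrite a0; lra].
    + subst m. rewrite En in H. simpl in H. rewrite a0 in H. apply mu_lex. apply IH; [lia|rewrite a0; lra].
    + subst. lra.
  - pose proof (a_even_rng m). pose proof (a_pos n); pose proof (a_le1 n).
    destruct (u_01 n) as [E|E].
    + apply mixA; auto.
    + rewrite (a_odd1 _ E) in H. lra.
  - pose proof (a_even_rng n). pose proof (a_pos m); pose proof (a_le1 m).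
    destruct (u_01 m) as [E|E].
    + rewrite (a_odd0 _ E) in H. lra.
    + apply mixB; auto.
  - pose proof (a_pos m); pose proof (a_le1 m); pose proof (a_pos n); pose proof (a_le1 n).
    destruct (u_01 m) as [E|E]; destruct (u_01 n) as [F|F].
    + rewrite (a_odd0 _ E), (a_odd0 _ F) in H. apply odd_lex; [congruence|]. apply IH; [lia|lra].
    + rewrite (a_odd0 _ E), (a_odd1 _ F) in H. lra.
    + apply first_lex. rewrite !u_odd, E, F. simpl. lia.
    + rewrite (a_odd1 _ E), (a_odd1 _ F) in H. apply odd_lex; [congruence|]. apply IH; [lia|lra].
Qed.

Lemma main_iff : forall i j, a_tm i < a_tm j <-> lex_lt (T i) (T j).
Proof.
  intros i j. split.
  - apply (main_lt_aux (i+j)); lia.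
  - intros H. destruct (Rtotal_order (a_tm i) (a_tm j)) as [h|[h|h]]; auto.
    + apply a_inj in h; subst. exfalso; eapply lex_irrefl; eauto.
    + exfalso. apply (lex_asym _ _ H). apply (main_lt_aux (j+i)); [lia|auto].
Qed.

Open Scope nat_scope.

Fixpoint Sn (n : nat) (f : nat -> nat) : nat :=
  match n with O => O | S m => Sn m f + f m end.

Lemma Sn_ext : forall n f g, (forall i, i < n -> f i = g i) -> Sn n f = Sn n g.
Proof. induction n; intros f g H; simpl; auto. rewrite (IHn f g) by (intros; apply H; lia). rewrite H by lia. auto. Qed.

Lemma Sn_add : forall a b f, Sn (a + b) f = Sn a f + Sn b (fun i => f (a + i)).
Proof. intros a b f; induction b. simpl. rewrite Nat.add_0_r; lia. rewrite Nat.add_succ_r. simpl. rewrite IHb. lia. Qed.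

Lemma Sn_plus : forall n f g, Sn n (fun i => f i + g i) = Sn n f + Sn n g.
Proof. induction n; intros; simpl; auto. rewrite IHn. lia. Qed.

Lemma Sn_double : forall n f, Sn (2*n) f = Sn n (fun p => f (2*p) + f (2*p+1)).
Proof.
  induction n; intros f; [reflexivity|].
  replace (2 * S n) with (S (S (2*n))) by lia.
  change (Sn (S (S (2*n))) f) with (Sn (2*n) f + f (2*n) + f (S (2*n))).
  change (Sn (S n) (fun p => f (2*p) + f (2*p+1))) with (Sn n (fun p => f (2*p) + f (2*p+1)) + (f (2*n) + f (2*n+1))).
  rewrite IHn. replace (S (2*n)) with (2*n+1) by lia. lia.
Qed.

Open Scope R_scope.

Lemma a_even_all : forall p, a_tm (2*p)%nat = a_tm p / 2 + 1/4.
Proof. intros p. destruct (a_even_any p) as [E|E]; auto. subst. simpl. rewrite a0. lra. Qed.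

Definition lc (x : R) := x/2 + 1/4.

Lemma Fa_eq : forall (F : R -> nat) x y, x = y -> F x = F y.
Proof. intros; subst; auto. Qed.

Lemma G_base : forall q, exists z, 0 < z <= 1 / INR 2 /\
  forall F : R -> nat, Sn 2 (fun i => F (a_tm (2*q + i)%nat)) = Sn 2 (fun m => F (z + INR m / INR 2)).
Proof.
  intros q. pose proof (a_pos q); pose proof (a_le1 q).
  assert (E0 : a_tm (2*q+0)%nat = a_tm q / 2 + 1/4) by (rewrite Nat.add_0_r; apply a_even_all).
  assert (E1 : a_tm (2*q+1)%nat = uc (a_tm q)) by apply a_odd.
  unfold uc in E1. replace (INR 2) with 2 by (simpl; lra).
  destruct (Rle_dec (a_tm q) (1/2)) as [h|h].
  - exists (a_tm q / 2 + 1/4). split; [lra|]. intros F. cbn [Sn]. rewrite E0, E1. replace (INR 0) with 0 by reflexivity. replace (INR 1) with 1 by reflexivity.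
    rewrite !Nat.add_0_l; f_equal; try apply Fa_eq; lra.
  - exists (a_tm q / 2 - 1/4). split; [lra|]. intros F. cbn [Sn]. rewrite E0, E1. replace (INR 0) with 0 by reflexivity. replace (INR 1) with 1 by reflexivity.
    rewrite !Nat.add_0_l. rewrite Nat.add_comm. f_equal; try apply Fa_eq; lra.
Qed.

Lemma Sn_split2 : forall H g, Sn (2*H) g = (Sn H g + Sn H (fun i => g (H+i)%nat))%nat.
Proof. intros. replace (2*H)%nat with (H+H)%nat by lia. apply Sn_add. Qed.

Lemma Sn_split4 : forall H g, Sn (2*(2*H)) g =
  (Sn H g + Sn H (fun i => g (H+i)%nat) + Sn H (fun i => g (2*H+i)%nat) + Sn H (fun i => g (3*H+i)%nat))%nat.
Proof.
  intros. rewrite Sn_split2, !Sn_split2.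
  assert (E1: Sn H (fun i => g (2*H + (H+i))%nat) = Sn H (fun i => g (3*H+i)%nat)) by (apply Sn_ext; intros; f_equal; lia).
  rewrite E1. lia.
Qed.

Lemma INR2 : INR 2 = 2. Proof. simpl; lra. Qed.

Lemma G_all : forall k q, exists z, 0 < z <= 1 / INR (2*2^k) /\
  forall F : R -> nat, Sn (2*2^k) (fun i => F (a_tm (2*2^k*q + i)%nat)) = Sn (2*2^k) (fun m => F (z + INR m / INR (2*2^k))).
Proof.
  induction k as [|k IH]; intros q.
  { apply G_base. }
  assert (EK : (2 * 2^(S k) = 2*(2*2^k))%nat) by (simpl; lia).
  rewrite EK. set (H := (2^k)%nat) in *.
  assert (HP : 0 < INR H) by (apply lt_0_INR; unfold H; apply Nat.neq_0_lt_0, Nat.pow_nonzero; lia).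
  destruct (IH q) as [z [Hz HF]].
  assert (E2 : INR (2*H) = 2 * INR H) by (rewrite mult_INR, INR2; auto).
  assert (E4 : INR (2*(2*H)) = 4 * INR H) by (rewrite !mult_INR, INR2; lra).
  rewrite E2 in Hz.
  exists (z/2). split. { rewrite E4. split; [lra|]. apply Rmult_le_reg_l with 2; [lra|].
    replace (2 * (z/2)) with z by field. replace (2 * (1 / (4 * INR H))) with (1 / (2 * INR H)) by (field; lra). lra. }
  intros F. rewrite Sn_double.
  rewrite (Sn_ext _ _ (fun p => (F (lc (a_tm (2*H*q + p)%nat)) + F (uc (a_tm (2*H*q + p)%nat)))%nat)).
  2:{ intros p Hp. f_equal.
      - replace (2 * (2 * H) * q + 2 * p)%nat with (2 * (2*H*q + p))%nat by lia.
        rewrite a_even_all. reflexivity.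
      - replace (2 * (2 * H) * q + (2 * p + 1))%nat with (2 * (2*H*q + p) + 1)%nat by lia.
        rewrite a_odd. reflexivity. }
  rewrite Sn_plus.
  pose proof (HF (fun x => F (lc x))) as H1. pose proof (HF (fun x => F (uc x))) as H2. cbv beta in H1, H2.
  rewrite H1, H2. clear H1 H2.
  rewrite Sn_split4, !(Sn_split2 H).
  assert (Hi : forall i, (i < H)%nat -> INR i + 1 <= INR H).
  { intros i Hi. rewrite <- S_INR. apply le_INR. lia. }
  assert (A1 : Sn H (fun m => F (lc (z + INR m / INR (2*H)))) = Sn H (fun i => F (z/2 + INR (H+i) / INR (2*(2*H))))).
  { apply Sn_ext. intros i _. apply Fa_eq. unfold lc. rewrite E2, E4, plus_INR. field. lra. }
  assert (A2 : Sn H (fun i => F (lc (z + INR (H+i) / INR (2*H))))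
             = Sn H (fun i => F (z/2 + INR (2*H+i) / INR (2*(2*H))))).
  { apply Sn_ext. intros i _. apply Fa_eq. unfold lc. rewrite E2, E4, !plus_INR, mult_INR, INR2. field. lra. }
  assert (B1 : Sn H (fun m => F (uc (z + INR m / INR (2*H)))) = Sn H (fun i => F (z/2 + INR (3*H+i) / INR (2*(2*H))))).
  { apply Sn_ext. intros i Hii. apply Fa_eq. unfold uc. rewrite E2, E4, plus_INR, mult_INR.
    replace (INR 3) with 3 by (simpl; lra).
    destruct Rle_dec as [h|h]. { field. lra. }
    exfalso. apply h. specialize (Hi i Hii).
    assert (INR i / (2 * INR H) <= (INR H - 1) / (2 * INR H)).
    { apply Rmult_le_compat_r; [|lra]. left; apply Rinv_0_lt_compat; lra. }
    assert ((INR H - 1) / (2 * INR H) = 1/2 - 1 / (2 * INR H)) by (field; lra). lra. }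
  assert (B2 : Sn H (fun i => F (uc (z + INR (H+i) / INR (2*H))))
             = Sn H (fun i => F (z/2 + INR i / INR (2*(2*H))))).
  { apply Sn_ext. intros i Hii. apply Fa_eq. unfold uc. rewrite E2, E4, plus_INR.
    destruct Rle_dec as [h|h]. 2:{ field. lra. }
    exfalso. pose proof (pos_INR i).
    assert ((INR H + INR i) / (2 * INR H) = 1/2 + INR i / (2 * INR H)) by (field; lra).
    assert (0 <= INR i / (2 * INR H)) by (apply Rmult_le_pos; [lra| left; apply Rinv_0_lt_compat; lra]).
    lra. }
  rewrite A1, A2, B1, B2. lia.
Qed.

Open Scope R_scope.

Definition ind (t x : R) : nat := if Rlt_dec x t then 1%nat else 0%nat.

Lemma count_Sn : forall a j n t, count_below a j n t = Sn n (fun k => ind t (a (j+k)%nat)).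
Proof. intros a j n t; induction n; simpl; auto. Qed.

Lemma count_split : forall a j n m t, count_below a j (n+m) t = (count_below a j n t + count_below a (j+n) m t)%nat.
Proof.
  intros. rewrite !count_Sn, Sn_add. f_equal. apply Sn_ext. intros i _. rewrite Nat.add_assoc. reflexivity.
Qed.

Lemma count_le : forall a j n t, (count_below a j n t <= n)%nat.
Proof. intros; induction n; simpl; auto. destruct Rlt_dec; lia. Qed.

Lemma count_triv : forall a j n t, 0 <= t <= 1 -> Rabs (INR (count_below a j n t) - INR n * t) <= INR n.
Proof.
  intros a j n t Ht. pose proof (count_le a j n t) as Hc. apply le_INR in Hc.
  pose proof (pos_INR (count_below a j n t)). pose proof (pos_INR n).
  apply Rabs_le. split; nra.
Qed.

Lemma grid_aux : forall (z M t : R) n, 0 < M ->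
  let c := Sn n (fun m => ind t (z + INR m / M)) in
  (INR c >= INR n \/ INR c >= (t - z) * M) /\ INR c <= INR n /\ (c = 0%nat \/ INR c < (t - z) * M + 1).
Proof.
  intros z M t n HM. induction n as [|n IH]; simpl Sn; cbv zeta in *.
  { simpl. split; [left; lra| split; [lra| left; reflexivity]]. }
  rewrite plus_INR, S_INR.
  destruct (Rlt_dec (z + INR n / M) t) as [h|h].
  - assert (INR n < (t - z) * M).
    { apply Rmult_lt_reg_r with (/M). apply Rinv_0_lt_compat; lra.
      replace ((t - z) * M * / M) with (t - z) by (field; lra). unfold Rdiv in h. lra. }
    assert (I : ind t (z + INR n / M) = 1%nat) by (unfold ind; destruct Rlt_dec; [reflexivity|contradiction]).
    rewrite I. simpl INR. destruct IH as [A [B C]]. split; [|split].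
    + destruct A; [left|right]; lra.
    + lra.
    + right. lra.
  - assert (INR n >= (t - z) * M).
    { apply Rnot_lt_ge in h. apply Rge_le in h. apply Rle_ge.
      apply Rmult_le_reg_r with (/M). apply Rinv_0_lt_compat; lra.
      replace ((t - z) * M * / M) with (t - z) by (field; lra). unfold Rdiv in h. lra. }
    assert (I : ind t (z + INR n / M) = 0%nat) by (unfold ind; destruct Rlt_dec; [contradiction|reflexivity]).
    rewrite I, Nat.add_0_r. simpl INR. rewrite Rplus_0_r. destruct IH as [A [B C]]. split; [|split].
    + right. lra.
    + lra.
    + auto.
Qed.

Lemma grid_bound : forall z t n, (0 < n)%nat -> 0 < z <= 1 / INR n -> 0 <= t <= 1 ->
  Rabs (INR (Sn n (fun m => ind t (z + INR m / INR n))) - INR n * t) <= 1.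
Proof.
  intros z t n Hn Hz Ht. assert (HM : 0 < INR n) by (apply lt_0_INR; lia).
  destruct (grid_aux z (INR n) t n HM) as [A [B C]]. cbv zeta in *.
  set (c := Sn n _) in *.
  assert (zM : z * INR n <= 1).
  { destruct Hz as [_ Hz]. apply Rmult_le_compat_r with (r := INR n) in Hz; [|lra].
    replace (1 / INR n * INR n) with 1 in Hz by (field; lra). lra. }
  assert (tM : t * INR n <= INR n) by nra.
  apply Rabs_le. split.
  - destruct A; nra.
  - destruct C as [C|C]. { rewrite C. simpl. nra. } nra.
Qed.

Definition Mk k := (2 * 2^k)%nat.

Lemma Mk_pos : forall k, (0 < Mk k)%nat.
Proof. intros k. unfold Mk. pose proof (Nat.pow_nonzero 2 k). lia. Qed.

Lemma block_bound : forall k q t, 0 <= t <= 1 ->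
  Rabs (INR (count_below a_tm (Mk k * q) (Mk k) t) - INR (Mk k) * t) <= 1.
Proof.
  intros k q t Ht. destruct (G_all k q) as [z [Hz HF]].
  rewrite count_Sn. unfold Mk. rewrite (HF (ind t)).
  apply grid_bound; auto. apply Mk_pos.
Qed.

Lemma aligned_bound : forall k q r t, 0 <= t <= 1 ->
  Rabs (INR (count_below a_tm (Mk k * q) (r * Mk k) t) - INR (r * Mk k) * t) <= INR r.
Proof.
  intros k q r t Ht. induction r as [|r IH].
  { simpl. rewrite Rmult_0_l, Rminus_0_r, Rabs_R0. lra. }
  replace (S r * Mk k)%nat with (r * Mk k + Mk k)%nat by lia.
  rewrite count_split. replace (Mk k * q + r * Mk k)%nat with (Mk k * (q + r))%nat by lia.
  pose proof (block_bound k (q+r) t Ht).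
  rewrite !plus_INR, S_INR.
  set (A := INR (count_below a_tm (Mk k * q) (r * Mk k) t)) in *.
  set (B := INR (count_below a_tm (Mk k * (q + r)) (Mk k) t)) in *.
  replace (A + B - (INR (r * Mk k) + INR (Mk k)) * t) with ((A - INR (r * Mk k) * t) + (B - INR (Mk k) * t)) by ring.
  eapply Rle_trans; [apply Rabs_triang|]. lra.
Qed.

Open Scope R_scope.

Lemma abs3 : forall a b c, Rabs (a + b + c) <= Rabs a + Rabs b + Rabs c.
Proof. intros. eapply Rle_trans; [apply Rabs_triang|]. pose proof (Rabs_triang a b). lra. Qed.

Lemma window_bound : forall k j n t, 0 <= t <= 1 ->
  Rabs (INR (count_below a_tm j n t) - INR n * t) <= INR n / INR (Mk k) + 2 * INR (Mk k).
Proof.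
  intros k j n t Ht. set (M := Mk k).
  assert (HM0 : (0 < M)%nat) by apply Mk_pos.
  assert (HM : 0 < INR M) by (apply lt_0_INR; lia).
  assert (Hn : 0 <= INR n / INR M) by (apply Rmult_le_pos; [apply pos_INR| left; apply Rinv_0_lt_compat; lra]).
  pose proof (Nat.div_mod_eq j M) as Ej. set (q0 := (j / M)%nat) in *. set (s0 := (j mod M)%nat) in *.
  assert (Hs0 : (s0 < M)%nat) by (apply Nat.mod_upper_bound; lia).
  destruct (le_lt_dec n (M - s0)) as [Hle|Hlt].
  { pose proof (count_triv a_tm j n t Ht). assert (INR n <= INR M) by (apply le_INR; lia). lra. }
  set (n1 := (n - (M - s0))%nat).
  pose proof (Nat.div_mod_eq n1 M) as En1. set (r := (n1 / M)%nat) in *. set (s := (n1 mod M)%nat) in *.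
  assert (Hs : (s < M)%nat) by (apply Nat.mod_upper_bound; lia).
  assert (En : n = ((M - s0) + r * M + s)%nat) by lia.
  rewrite En at 1. rewrite !count_split.
  replace (j + (M - s0 + r * M))%nat with (M * (q0 + 1) + r * M)%nat by lia.
  replace (j + (M - s0))%nat with (M * (q0 + 1))%nat by lia.
  pose proof (count_triv a_tm j (M - s0) t Ht) as E1.
  pose proof (aligned_bound k (q0+1) r t Ht) as E2. fold M in E2.
  pose proof (count_triv a_tm (M * (q0 + 1) + r * M) s t Ht) as E3.
  assert (Hr : INR r <= INR n / INR M).
  { apply Rmult_le_reg_r with (INR M); [lra|].
    replace (INR n / INR M * INR M) with (INR n) by (field; lra).
    rewrite <- mult_INR. apply le_INR. lia. }
  assert (H1 : INR (M - s0) <= INR M) by (apply le_INR; lia).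
  assert (H3 : INR s <= INR M) by (apply le_INR; lia).
  replace (INR n) with (INR (M - s0) + INR (r * M) + INR s) at 1 by (rewrite En, !plus_INR; reflexivity).
  rewrite !plus_INR.
  set (A := INR (count_below a_tm j (M - s0) t)) in *.
  set (B := INR (count_below a_tm (M * (q0 + 1)) (r * M) t)) in *.
  set (C := INR (count_below a_tm (M * (q0 + 1) + r * M) s t)) in *.
  replace (A + B + C - (INR (M - s0) + INR (r * M) + INR s) * t)
    with ((A - INR (M - s0) * t) + (B - INR (r * M) * t) + (C - INR s * t)) by ring.
  eapply Rle_trans; [apply abs3|]. lra.
Qed.

Open Scope R_scope.

Lemma zero_shift : forall j n t, count_below zero_a_tm (S j) n t = count_below a_tm j n t.
Proof. intros. rewrite !count_Sn. apply Sn_ext. intros. reflexivity. Qed.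

Lemma zero_window : forall k j n t, 0 <= t <= 1 ->
  Rabs (INR (count_below zero_a_tm j n t) - INR n * t) <= INR n / INR (Mk k) + 2 * INR (Mk k) + 2.
Proof.
  intros k j n t Ht.
  assert (HM : 0 < INR (Mk k)) by (apply lt_0_INR; apply Mk_pos).
  destruct j as [|j].
  2:{ rewrite zero_shift. pose proof (window_bound k j n t Ht). lra. }
  destruct n as [|n].
  { simpl. rewrite Rmult_0_l, Rminus_0_r, Rabs_R0.
    assert (0 <= 0 / INR (Mk k)) by (unfold Rdiv; rewrite Rmult_0_l; lra). lra. }
  replace (S n) with (1 + n)%nat by lia. rewrite count_split.
  simpl (0 + 1)%nat. rewrite zero_shift.
  pose proof (window_bound k 0 n t Ht) as W.
  pose proof (count_triv zero_a_tm 0 1 t Ht) as C1.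
  assert (INR n / INR (Mk k) <= INR (1 + n) / INR (Mk k)).
  { apply Rmult_le_compat_r; [left; apply Rinv_0_lt_compat; lra|]. apply le_INR; lia. }
  rewrite !plus_INR in *.
  set (A := INR (count_below zero_a_tm 0 1 t)) in *.
  set (B := INR (count_below a_tm 0 n t)) in *.
  replace (A + B - (INR 1 + INR n) * t) with ((A - INR 1 * t) + (B - INR n * t)) by ring.
  eapply Rle_trans; [apply Rabs_triang|]. simpl INR in *. lra.
Qed.

Lemma canon_from_bound : forall b, pairwise_distinct b -> (forall i, 0 <= b i <= 1) ->
  (forall k j n t, 0 <= t <= 1 ->
     Rabs (INR (count_below b j n t) - INR n * t) <= INR n / INR (Mk k) + 2 * INR (Mk k) + 2) ->
  canonical b.
Proof.
  intros b Hd Hr Hb. split; [auto|split; [auto|]].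
  intros t Ht eps Heps.
  destruct (INR_unbounded (2 / eps)) as [k Hk].
  set (M := INR (Mk k)).
  assert (HkM : INR k <= M).
  { unfold M, Mk. apply le_INR. pose proof (Nat.pow_gt_lin_r 2 k ltac:(lia)). lia. }
  assert (HM : 0 < M) by (apply lt_0_INR; apply Mk_pos).
  destruct (INR_unbounded (2 * (2 * M + 2) / eps)) as [N HN].
  exists N. intros n j HNn Hn.
  assert (Hn' : 0 < INR n) by (apply lt_0_INR; lia).
  assert (HNn' : INR N <= INR n) by (apply le_INR; lia).
  specialize (Hb k j n t Ht). fold M in Hb.
  replace (INR (count_below b j n t) / INR n - t) with ((INR (count_below b j n t) - INR n * t) / INR n) by (field; lra).
  unfold Rdiv at 1. rewrite Rabs_mult, Rabs_inv, (Rabs_right (INR n)) by lra.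
  apply Rmult_lt_reg_r with (INR n); [lra|].
  rewrite Rmult_assoc, Rinv_l, Rmult_1_r by lra.
  eapply Rle_lt_trans; [apply Hb|].
  assert (E1 : INR n / M < eps / 2 * INR n).
  { apply Rmult_lt_reg_r with (M); [lra|].
    replace (INR n / M * M) with (INR n) by (field; lra).
    assert (2 / eps < M) by lra.
    assert (eps * (2 / eps) = 2) by (field; lra).
    assert (eps * M > 2) by (apply Rmult_lt_compat_l with (r:=eps) in H; lra).
    nra. }
  assert (E2 : 2 * M + 2 < eps / 2 * INR n).
  { assert (2 * (2 * M + 2) / eps < INR n) by lra.
    apply Rmult_lt_compat_l with (r := eps/2) in H; [|lra].
    replace (eps / 2 * (2 * (2 * M + 2) / eps)) with (2 * M + 2) in H by (field; lra). lra. }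
  lra.
Qed.

Open Scope R_scope.

Lemma lex_p1 : forall u v, lex_lt u v <-> lex_lt (fun i => (u i + 1)%nat) (fun i => (v i + 1)%nat).
Proof.
  intros u v; split; intros [k [H1 H2]]; exists k; split.
  - intros i Hi; rewrite H1; auto.
  - lia.
  - intros i Hi. specialize (H1 i Hi). lia.
  - lia.
Qed.

Lemma zero_distinct : pairwise_distinct zero_a_tm.
Proof.
  intros [|i] [|j] Hij; simpl.
  - lia.
  - pose proof (a_pos j). lra.
  - pose proof (a_pos i). lra.
  - intros E. apply a_inj in E. lia.
Qed.

Lemma rep0 : represents_valid word_0u' zero_a_tm.
Proof.
  split; [apply zero_distinct|].
  intros [|i] [|j]; simpl.
  - split; intros H; [lra|]. exfalso; eapply lex_irrefl; eauto.
  - split; intros _.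
    + exists 0%nat. split; [intros; lia|]. unfold shift. simpl. lia.
    + apply a_pos.
  - split; intros H.
    + pose proof (a_pos i). lra.
    + exfalso. destruct H as [k [H1 H2]]. unfold shift in *. destruct k as [|k].
      * simpl in H2. lia.
      * specialize (H1 0%nat ltac:(lia)). simpl in H1. lia.
  - rewrite main_iff, lex_p1. split; apply lex_ext; intros; reflexivity.
Qed.

Lemma canon0 : canonical zero_a_tm.
Proof.
  apply canon_from_bound.
  - apply zero_distinct.
  - intros [|i]; simpl; [lra|]. pose proof (a_pos i); pose proof (a_le1 i). lra.
  - intros. apply zero_window; auto.
Qed.

Lemma a1 : a_tm 1 = 1.
Proof. pose proof (a_odd 0) as E. simpl in E. change (2*0+1)%nat with 1%nat in E. rewrite E, a0. unfold uc. destruct Rle_dec; lra. Qed.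

Lemma count_all : forall b j n t, (forall k, (k < n)%nat -> b (j + k)%nat < t) -> count_below b j n t = n.
Proof.
  intros b j n t H. induction n; simpl; auto.
  rewrite IHn by (intros; apply H; lia). destruct Rlt_dec as [_|h]; [lia|].
  exfalso; apply h; apply H; lia.
Qed.

Lemma not_erg2 : ~ ergodic_valid word_2utm.
Proof.
  intros [b [[Hd Ho] [_ [Hr Hc]]]].
  assert (H0 : forall k, b (S k) < b 0%nat).
  { intros k. apply Ho. exists 0%nat. split; [intros; lia|]. unfold shift. simpl.
    rewrite Nat.add_0_r. pose proof (u_le1 k). lia. }
  assert (H2 : forall k, k <> 1%nat -> b (S k) < b 2%nat).
  { intros k Hk. apply Ho.
    assert (a_tm k < a_tm 1).
    { rewrite a1. destruct (Rle_lt_or_eq_dec _ _ (a_le1 k)) as [h|h]; auto.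
      rewrite <- a1 in h. apply a_inj in h. lia. }
    apply main_iff in H. eapply lex_ext; [| |exact H]; intros; reflexivity. }
  set (d := b 2%nat). assert (Hd2 : d < 1) by (pose proof (H0 1%nat); pose proof (Hr 0%nat); unfold d; lra).
  assert (Hd0 : 0 <= d) by (apply Hr).
  set (t := (d + 1) / 2).
  destruct (Hc t ltac:(unfold t; lra) ((1 - d)/2) ltac:(lra)) as [N HN].
  specialize (HN (S N) 3%nat ltac:(lia) ltac:(lia)).
  rewrite count_all in HN.
  2:{ intros k _. replace (3 + k)%nat with (S (k + 2)) by lia. pose proof (H2 (k+2)%nat ltac:(lia)). unfold t. fold d in H. lra. }
  rewrite Rdiv_diag in HN by (apply not_0_INR; lia).
  rewrite Rabs_right in HN; unfold t in *; lra.
Qed.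

Theorem mainTheorem8 :
  (ergodic_valid word_0u' /\ represents_valid word_0u' zero_a_tm /\ canonical zero_a_tm)
  /\ ~ ergodic_valid word_2utm.
Proof.
  split; [|apply not_erg2].
  split; [exists zero_a_tm; split; [apply rep0|apply canon0]|split; [apply rep0|apply canon0]].
Qed.
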